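(* Let $A$ be a non-zero $n\times m$ matrix with entries in $[0,1]$, with value $v$, and let $y^*$ be the minimax strategy of the column player used by LRCA. Suppose the row player follows a no-regret algorithm having the stability property with respect to $y^*$, and the column player plays the LRCA algorithm. Then for every $\varepsilon>0$ there exists $l\in\mathbb{N}$ such that $f(x_l)-v\le\varepsilon$.
   Context: Repeated two-player zero-sum game: at round $t$ the row player plays $x_t\in\Delta_n$ and the column player $y_t\in\Delta_m$; the row player minimizes, the column player maximizes $x_t^\top Ay_t$. $v$ is the value of the game and $f(x):=\max_{y\in\Delta_m}x^\top Ay$; a minimax strategy of the column player is $y$ with $\min_{x\in\Delta_n}x^\top Ay=v$. The row player's algorithm chooses $x_{t+1}$ from the history; it is no-regret if for every sequence of column strategies, $\lim_{T\to\infty}\big(\min_{i}\frac1T\sum_{t=1}^Te_i^\top Ay_t-\frac1T\sum_{t=1}^Tx_t^\top Ay_t\big)=0$. It has the stability property if, for every $t$, $y_t=y^*$ implies $x_{t+1}=x_t$. LRCA for the column player (who knows $A$): at odd rounds $y_t=y^*$; at even rounds $t$, $e_t\in\arg\max_{e\in\{e_1,\dots,e_m\}}x_{t-1}^\top Ae$, $\alpha_t=\frac{f(x_{t-1})-v}{\max(n/4,2)}$, $y_t=(1-\alpha_t)y^*+\alpha_te_t$. *)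

(* Defs.v *)
From HB Require Import structures.
From mathcomp Require Import all_boot all_order all_algebra.
Set Implicit Arguments. Unset Strict Implicit. Unset Printing Implicit Defensive.
Import Order.TTheory GRing.Theory Num.Theory.
Local Open Scope ring_scope.

Definition simplex (R : realFieldType) (k : nat) (x : 'rV[R]_k) : Prop :=
  (forall i, 0 <= x 0 i) /\ \sum_i x 0 i = 1.

Definition pure {R : realFieldType} {k : nat} (j : 'I_k) : 'rV[R]_k := delta_mx 0 j.

Definition payoff (R : realFieldType) (n m : nat) (A : 'M[R]_(n, m))
  (x : 'rV[R]_n) (y : 'rV[R]_m) : R := (x *m A *m y^T) 0 0.

(* f(x) = max_{y in Delta_m} x^T A y, written as the maximum over pure
   strategies (the maximum of a linear function on the simplex is attained at
   a vertex). *)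
Definition fval (R : realFieldType) (n m : nat) (A : 'M[R]_(n, m.+1))
  (x : 'rV[R]_n) : R :=
  \big[Num.max/payoff A x (pure ord0)]_(j < m.+1) payoff A x (pure j).

Definition is_value (R : realFieldType) (n m : nat) (A : 'M[R]_(n, m.+1)) (v : R) : Prop :=
  (exists2 x, simplex x & fval A x = v) /\ (forall x, simplex x -> v <= fval A x).

Definition col_minimax (R : realFieldType) (n m : nat) (A : 'M[R]_(n, m)) (v : R)
  (y : 'rV[R]_m) : Prop :=
  simplex y /\ (exists2 x, simplex x & payoff A x y = v) /\
  (forall x, simplex x -> v <= payoff A x y).

(* A deterministic row-player algorithm maps the history of column strategies
   [y_1; ...; y_t] to x_{t+1}; x_1 = alg [::]. *)
Definition row_alg (R : realFieldType) (n m : nat) := seq 'rV[R]_m -> 'rV[R]_n.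

(* Rounds are indexed from 1; ys t is y_t. x_t = alg [y_1; ...; y_{t-1}]. *)
Definition row_play (R : realFieldType) (n m : nat) (alg : row_alg R n m)
  (ys : nat -> 'rV[R]_m) (t : nat) : 'rV[R]_n :=
  alg [seq ys i | i <- iota 1 t.-1].

Definition alg_valid (R : realFieldType) (n m : nat) (alg : row_alg R n m) : Prop :=
  forall h : seq 'rV[R]_m, (forall y, y \in h -> simplex y) -> simplex (alg h).

Definition regret (R : realFieldType) (n m : nat) (A : 'M[R]_(n.+1, m))
  (alg : row_alg R n.+1 m) (ys : nat -> 'rV[R]_m) (T : nat) : R :=
  \big[Num.min/ T%:R^-1 * \sum_(1 <= t < T.+1) payoff A (pure ord0) (ys t)]_(i < n.+1)
      (T%:R^-1 * \sum_(1 <= t < T.+1) payoff A (pure i) (ys t))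
  - T%:R^-1 * \sum_(1 <= t < T.+1) payoff A (row_play alg ys t) (ys t).

Definition no_regret (R : realFieldType) (n m : nat) (A : 'M[R]_(n.+1, m))
  (alg : row_alg R n.+1 m) : Prop :=
  forall ys : nat -> 'rV[R]_m, (forall t, simplex (ys t)) ->
  forall eps : R, 0 < eps -> exists N : nat, forall T : nat, (N <= T)%N ->
    `| regret A alg ys T | <= eps.

Definition stable (R : realFieldType) (n m : nat) (alg : row_alg R n m)
  (ystar : 'rV[R]_m) : Prop :=
  forall ys : nat -> 'rV[R]_m, (forall t, simplex (ys t)) ->
  forall t : nat, (1 <= t)%N -> ys t = ystar ->
    row_play alg ys t.+1 = row_play alg ys t.

(* The column sequence ys is produced by LRCA against the row player's plays
   xs (any tie-breaking in the argmax is allowed). *)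
Definition lrca (R : realFieldType) (n m : nat) (A : 'M[R]_(n.+1, m.+1)) (v : R)
  (ystar : 'rV[R]_m.+1) (xs : nat -> 'rV[R]_n.+1) (ys : nat -> 'rV[R]_m.+1) : Prop :=
  forall t : nat, (1 <= t)%N ->
    (odd t -> ys t = ystar) /\
    (~~ odd t ->
      exists j : 'I_m.+1,
        (forall j' : 'I_m.+1, payoff A (xs t.-1) (pure j') <= payoff A (xs t.-1) (pure j)) /\
        let alpha := (fval A (xs t.-1) - v) / Num.max ((n.+1)%:R / 4) 2 in
        ys t = (1 - alpha) *: ystar + alpha *: pure j).

(* Main.v *)
Require Import Defs.
From HB Require Import structures.
From mathcomp Require Import all_boot all_order all_algebra.
From mathcomp Require Import ring lra zify.
From Stdlib Require Import Classical.
Set Implicit Arguments. Unset Strict Implicit. Unset Printing Implicit Defensive.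
Import Order.TTheory GRing.Theory Num.Theory.
Local Open Scope ring_scope.

Section H.
Variable R : realFieldType.

Lemma payoffE n m (A : 'M[R]_(n, m)) x y :
  payoff A x y = \sum_i \sum_j x 0 i * A i j * y 0 j.
Proof.
rewrite /payoff mxE; under eq_bigr => j _ do rewrite mxE mulr_suml; rewrite exchange_big /=; apply: eq_bigr => i _; apply: eq_bigr => j _.
by rewrite !mxE.
Qed.

Lemma pureE k (j l : 'I_k) : (pure j : 'rV[R]_k) 0 l = (l == j)%:R.
Proof. by rewrite /pure mxE eqxx. Qed.

Lemma payoff_pure_r n m (A : 'M[R]_(n, m)) x j :
  payoff A x (pure j) = \sum_i x 0 i * A i j.
Proof.
rewrite payoffE; apply: eq_bigr => i _.
rewrite (bigD1 j) //= big1 ?pureE ?eqxx ?mulr1 ?addr0 // => l /negbTE hl.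
by rewrite pureE hl mulr0.
Qed.

Lemma payoff_pure_l n m (A : 'M[R]_(n, m)) i y :
  payoff A (pure i) y = \sum_j A i j * y 0 j.
Proof.
rewrite payoffE (bigD1 i) //= [X in _ + X]big1 ?addr0.
  by apply: eq_bigr => j _; rewrite pureE eqxx mul1r.
by move=> l /negbTE hl; apply: big1 => j _; rewrite pureE hl !mul0r.
Qed.

Lemma payoff_lin_y n m (A : 'M[R]_(n, m)) x y :
  payoff A x y = \sum_j y 0 j * payoff A x (pure j).
Proof.
rewrite payoffE exchange_big; apply: eq_bigr => j _.
rewrite payoff_pure_r mulr_sumr; apply: eq_bigr => i _; ring.
Qed.

Lemma payoff_lin_x n m (A : 'M[R]_(n, m)) x y :
  payoff A x y = \sum_i x 0 i * payoff A (pure i) y.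
Proof.
rewrite payoffE; apply: eq_bigr => i _.
rewrite payoff_pure_l mulr_sumr; apply: eq_bigr => j _; ring.
Qed.

Lemma conv_le k (w : 'rV[R]_k) (F : 'I_k -> R) M :
  simplex w -> (forall j, F j <= M) -> \sum_j w 0 j * F j <= M.
Proof.
move=> [w0 w1] hF; rewrite (_ : M = \sum_j w 0 j * M); last by rewrite -mulr_suml w1 mul1r.
by apply: ler_sum => j _; apply: ler_wpM2l.
Qed.

Lemma conv_ge k (w : 'rV[R]_k) (F : 'I_k -> R) M :
  simplex w -> (forall j, M <= F j) -> M <= \sum_j w 0 j * F j.
Proof.
move=> [w0 w1] hF; rewrite (_ : M = \sum_j w 0 j * M); last by rewrite -mulr_suml w1 mul1r.
by apply: ler_sum => j _; apply: ler_wpM2l.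
Qed.

Lemma payoff_lin_comb n m (A : 'M[R]_(n, m)) x y1 y2 a :
  payoff A x ((1 - a) *: y1 + a *: y2) = (1 - a) * payoff A x y1 + a * payoff A x y2.
Proof.
rewrite !payoffE !mulr_sumr -big_split /=; apply: eq_bigr => i _.
rewrite !mulr_sumr -big_split /=; apply: eq_bigr => j _.
rewrite !mxE; ring.
Qed.


Lemma simplex_pure k (j : 'I_k) : simplex (pure j : 'rV[R]_k).
Proof.
split=> [i|]; first by rewrite pureE ler0n.
rewrite (bigD1 j) //= big1 ?pureE ?eqxx ?addr0 // => l /negbTE hl.
by rewrite pureE hl.
Qed.

Lemma fval_ge n m (A : 'M[R]_(n, m.+1)) x j : payoff A x (pure j) <= fval A x.
Proof. rewrite /fval; exact: (le_bigmax _ (fun j => payoff A x (pure j)) j). Qed.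

Lemma fval_le n m (A : 'M[R]_(n, m.+1)) x M :
  (forall j, payoff A x (pure j) <= M) -> fval A x <= M.
Proof. by move=> h; apply: bigmax_le. Qed.

Lemma payoff_le_fval n m (A : 'M[R]_(n, m.+1)) x y :
  simplex y -> payoff A x y <= fval A x.
Proof. by move=> sy; rewrite payoff_lin_y; apply: conv_le => // j; apply: fval_ge. Qed.

Lemma payoff_01 n m (A : 'M[R]_(n, m)) x y :
  (forall i j, 0 <= A i j <= 1) -> simplex x -> simplex y ->
  0 <= payoff A x y <= 1.
Proof.
move=> hA sx sy; rewrite payoff_lin_x; apply/andP; split.
  apply: conv_ge => // i; rewrite payoff_pure_l.
  under eq_bigr do rewrite mulrC.
  by apply: conv_ge => // j; case/andP: (hA i j).
apply: conv_le => // i; rewrite payoff_pure_l.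
under eq_bigr do rewrite mulrC.
by apply: conv_le => // j; case/andP: (hA i j).
Qed.

Lemma simplex_comb k (y1 y2 : 'rV[R]_k) a :
  simplex y1 -> simplex y2 -> 0 <= a <= 1 -> simplex ((1 - a) *: y1 + a *: y2).
Proof.
move=> [p1 s1] [p2 s2] /andP[a0 a1]; split.
  move=> i; rewrite !mxE; apply: addr_ge0; apply: mulr_ge0 => //; lra.
under eq_bigr do rewrite !mxE.
by rewrite big_split /= -!mulr_sumr s1 s2; ring.
Qed.


Lemma core (n m : nat) (A : 'M[R]_(n.+1, m.+1))
  (v : R) (ystar : 'rV[R]_m.+1) (alg : row_alg R n.+1 m.+1)
  (ys : nat -> 'rV[R]_m.+1) :
  (forall i j, 0 <= A i j <= 1) ->
  is_value A v ->
  col_minimax A v ystar ->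
  alg_valid alg ->
  no_regret A alg ->
  stable alg ystar ->
  lrca A v ystar (row_play alg ys) ys ->
  ys 0%N = ystar ->
  forall eps : R, 0 < eps ->
    exists l : nat, (1 <= l)%N /\ fval A (row_play alg ys l) - v <= eps.
Proof.
move=> hA [[xs sxs fxs] hv] [sys [_ hmm]] halg hnr hst hl hy0 eps eps0.
have c2 : 2 <= Num.max ((n.+1)%:R / 4) 2 :> R by rewrite le_max lexx orbT.
move: c2 hl; rewrite /lrca; set c := Num.max ((n.+1)%:R / 4) 2 : R; clearbody c => c2 hl.
have v0 : 0 <= v.
  rewrite -fxs; apply: le_trans (fval_ge _ _ ord0).
  by case/andP: (payoff_01 hA sxs (simplex_pure ord0)).
have hxS : forall t, (forall s, (s < t)%N -> simplex (ys s)) -> simplex (row_play alg ys t).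
  move=> t h; apply: halg => y /mapP [i]; rewrite mem_iota => /andP[h1 hi] ->.
  apply: h; lia.
have hfv : forall t, simplex (row_play alg ys t) -> v <= fval A (row_play alg ys t) <= 1.
  move=> t st; rewrite hv //=; apply: fval_le => j.
  by case/andP: (payoff_01 hA st (simplex_pure j)).
have hysS : forall t, simplex (ys t).
  suff: forall T s, (s <= T)%N -> simplex (ys s) by move=> h t; apply: (h t).
  elim=> [|T IH] s hs.
    have -> : s = 0%N by lia.
    by rewrite hy0.
  rewrite leq_eqVlt in hs; case/orP: hs => [/eqP -> | hs]; last by apply: IH.
  have [hodd heven] := hl T.+1 isT.
  case: (boolP (odd T.+1)) => ho; first by rewrite hodd.
  have [j [_ ->]] := heven ho.
  apply: simplex_comb => //; first exact: simplex_pure.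
  have sx : simplex (row_play alg ys T.+1.-1) by apply: hxS => s' hs'; apply: IH; lia.
  have /andP[f1 f2] := hfv _ sx.
  simpl in *; apply/andP; split; first by apply: divr_ge0; lra.
  rewrite ler_pdivrMr; lra.
have hxS' : forall t, simplex (row_play alg ys t) by move=> t; apply: hxS.
apply: NNPP => hno.
have hbig : forall l, (1 <= l)%N -> eps < fval A (row_play alg ys l) - v.
  move=> l hl1; rewrite ltNge; apply/negP => hle; apply: hno; by exists l.
set K := eps * eps / c.
have K0 : 0 < K by rewrite /K divr_gt0 ?mulr_gt0 //; lra.
have hp : forall t, (1 <= t)%N -> v + (~~ odd t)%:R * K <= payoff A (row_play alg ys t) (ys t).
  move=> t ht; have [hodd heven] := hl t ht.
  case: (boolP (odd t)) => ho /=.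
    by rewrite hodd // mul0r addr0; exact: hmm _ (hxS' t).
  have [j [hj ->]] := heven ho.
  case: t ht ho {hodd heven} hj => [|[|t']] //= ht ho hj.
  have Ex : row_play alg ys t'.+2 = row_play alg ys t'.+1.
    apply: hst => //; apply: (hl t'.+1 isT).1 => /=; by move: ho; rewrite /= !negbK.
  rewrite Ex payoff_lin_comb.
  set x := row_play alg ys t'.+1.
  have ef : payoff A x (pure j) = fval A x.
    by apply/eqP; rewrite eq_le fval_ge /=; apply: fval_le => j'; exact: hj j'.
  have h1 := hmm x (hxS' _).
  have h2 := hbig t'.+1 isT.
  rewrite ef -/x; set a := (fval A x - v) / c; set d := fval A x - v.
  have ha : a * c = d by rewrite /a divfK //; apply: lt0r_neq0; lra.
  have hd : eps < d by rewrite /d /x.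
  have hf1 : fval A x <= 1 by case/andP: (hfv _ (hxS' t'.+1)).
  have a0 : 0 <= a by rewrite /a divr_ge0 //; lra.
  have a1 : a <= 1 by rewrite /a ler_pdivrMr; lra.
  have hK : K <= a * d.
    rewrite /K ler_pdivrMr; last lra.
    rewrite mulrAC ha; nra.
  have -> : fval A x = v + d by rewrite /d; ring.
  clearbody a d.
  have hp' : 0 <= (1 - a) * (payoff A x ystar - v) by apply: mulr_ge0; lra.
  lra.
have hsum : forall T, T%:R * v + (T./2)%:R * K <=
    \sum_(1 <= t < T.+1) payoff A (row_play alg ys t) (ys t).
  elim=> [|T IH]; first by rewrite big_geq // !mul0r addr0.
  rewrite big_nat_recr //=.
  have e : (T.+1)./2 = (odd T + T./2)%N by rewrite -uphalf_half.
  have := hp T.+1 isT; rewrite /= negbK => hT.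
  rewrite ?e ?uphalf_half natrD -natr1.
  move: hT IH; set b := (odd T)%:R; set h := (T./2)%:R; set S := \sum_(_ <= _ < _) _.
  move=> hT IH; lra.
have hreg : forall T, (0 < T)%N -> regret A alg ys T <=
    v - T%:R^-1 * \sum_(1 <= t < T.+1) payoff A (row_play alg ys t) (ys t).
  move=> T T0; rewrite /regret lerD2r.
  apply: (@le_trans _ _ (\sum_i xs 0 i * (T%:R^-1 * \sum_(1 <= t < T.+1) payoff A (pure i) (ys t)))).
    apply: conv_ge => // i.
    exact: (bigmin_le _ i (fun i => T%:R^-1 * \sum_(1 <= t < T.+1) payoff A (pure i) (ys t))).
  have -> : \sum_i xs 0 i * (T%:R^-1 * \sum_(1 <= t < T.+1) payoff A (pure i) (ys t))
      = T%:R^-1 * \sum_(1 <= t < T.+1) payoff A xs (ys t).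
    under eq_bigr do rewrite mulrCA; rewrite -mulr_sumr; congr (_ * _).
    under eq_bigr do rewrite mulr_sumr.
    rewrite exchange_big; apply: eq_bigr => t _; by rewrite payoff_lin_x.
  have hs : \sum_(1 <= t < T.+1) payoff A xs (ys t) <= \sum_(1 <= t < T.+1) v.
    by apply: ler_sum => t _; rewrite -fxs; apply: payoff_le_fval.
  rewrite sumr_const_nat subn1 /= -mulr_natr in hs.
  have Tp : 0 < T%:R :> R by rewrite ltr0n.
  have Ti : 0 <= T%:R^-1 :> R by rewrite invr_ge0 ltW.
  have := ler_wpM2l Ti hs.
  by rewrite mulrCA mulVf ?mulr1 // lt0r_neq0.
have K4 : 0 < K / 4 by rewrite divr_gt0.
have [N hN] := hnr ys hysS (K / 4) K4.
have hNT : (N <= (N.+1).*2)%N by rewrite -addnn; lia.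
have := hN _ hNT; rewrite ler_norml => /andP[hlo _].
have T0 : (0 < (N.+1).*2)%N by rewrite double_gt0.
have := hreg _ T0.
have := hsum (N.+1).*2; rewrite half_double.
have -> : ((N.+1).*2)%:R = 2 * (N.+1)%:R :> R by rewrite -addnn natrD; ring.
have tp : 0 < (N.+1)%:R :> R by rewrite ltr0n.
move: hlo; set t := (N.+1)%:R; set S := \sum_(_ <= _ < _) _; set r := regret _ _ _ _.
move=> hlo hS hr.
have h2 : (2 * t)^-1 * (2 * t * v + t * K) <= (2 * t)^-1 * S.
  apply: ler_wpM2l; last lra.
  rewrite invr_ge0; lra.
have e2 : (2 * t)^-1 * (2 * t * v + t * K) = v + K / 2.
  by field; rewrite addrC natr1 pnatr_eq0.
rewrite e2 in h2.
move: hr h2; set Y := (2 * t)^-1 * S => hr h2. clearbody Y r K. lra.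
Qed.

End H.
Unset Implicit Arguments.
Set Strict Implicit.

Theorem theorem18 (R : realFieldType) (n m : nat) (A : 'M[R]_(n.+1, m.+1))
  (v : R) (ystar : 'rV[R]_m.+1) (alg : row_alg R n.+1 m.+1)
  (ys : nat -> 'rV[R]_m.+1) :
  A != 0 ->
  (forall i j, 0 <= A i j <= 1) ->
  is_value A v ->
  col_minimax A v ystar ->
  alg_valid alg ->
  no_regret A alg ->
  stable alg ystar ->
  lrca A v ystar (row_play alg ys) ys ->
  forall eps : R, 0 < eps ->
    exists l : nat, (1 <= l)%N /\ fval A (row_play alg ys l) - v <= eps.
Proof.
move=> _ hA hv hmm halg hnr hst hl eps eps0.
pose ys' t := if t == 0%N then ystar else ys t.
have Erp : forall t, row_play alg ys' t = row_play alg ys t.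
  move=> t; rewrite /row_play; congr alg; apply/eq_in_map => i.
  by rewrite mem_iota /ys'; case: i.
have hl' : lrca A v ystar (row_play alg ys') ys'.
  move=> t ht; rewrite Erp /ys'; case: t ht => [|t] //= _.
  exact: (hl t.+1 isT).
have [l [hl1 hle]] := core hA hv hmm halg hnr hst hl' (erefl _) eps0.
by exists l; rewrite -Erp.
Qed.
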